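(* If $q>487$ is a power of an odd prime, then there are pairwise distinct elements $\alpha_1,\dots,\alpha_5\in\mathbb{F}_q^*$ such that $\alpha_i+\alpha_j$ is a nonzero square in $\mathbb{F}_q$ for all $1\le i<j\le5$. *)

(* Defs.v *)
From HB Require Import structures.
From mathcomp Require Import all_boot all_order all_algebra all_field.
Set Implicit Arguments. Unset Strict Implicit. Unset Printing Implicit Defensive.

(* Main.v *)
Require Import Defs.
From HB Require Import structures.
From mathcomp Require Import all_boot all_order all_algebra all_field.
From mathcomp Require Import cyclic.
From mathcomp Require Import zify ring lra.
Import GRing.Theory Num.Theory Order.TTheory.
Set Implicit Arguments. Unset Strict Implicit.
Local Open Scope ring_scope.

Lemma unit_pow (F : finFieldType) (x : F) : x != 0 -> x ^+ #|F|.-1 = 1.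
Proof.
move=> nz; apply: (mulfI nz); rewrite -exprS prednK ?expf_card ?mulr1 //.
by apply: (@leq_trans 2) => //; exact: finNzRing_gt1.
Qed.

Lemma prim_ex (F : finFieldType) : exists z : F, (#|F|.-1).-primitive_root z.
Proof.
have gt1 := finNzRing_gt1 F.
have /hasP[z _ Hz] : has (#|F|.-1).-primitive_root (enum [pred x : F | x != 0]).
  apply: has_prim_root.
  - by rewrite -ltnS prednK // ltnW.
  - by apply/allP => x; rewrite mem_enum inE unity_rootE => /unit_pow ->.
  - exact: enum_uniq.
  - by rewrite -cardE (cardC1 (0 : F)).
by exists z.
Qed.

Definition qe (F : finFieldType) (x : F) := x ^+ (#|F|.-1)./2.

Lemma n_eq (F : finFieldType) : odd #|F| -> #|F|.-1 = ((#|F|.-1)./2).*2.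
Proof.
move=> Ho; have := odd_double_half (#|F|.-1).
have gt1 := finNzRing_gt1 F.
have -> : odd #|F|.-1 = false.
  by move: Ho; rewrite -{1}(prednK (ltnW gt1)) /= => /negbTE.
by move=> /= H; rewrite -[in LHS]H.
Qed.

Lemma m_gt0 (F : finFieldType) : odd #|F| -> (0 < (#|F|.-1)./2)%N.
Proof.
move=> Ho; have gt1 := finNzRing_gt1 F; have Hn := n_eq Ho.
rewrite lt0n; apply/negP => /eqP H; move: Hn gt1; rewrite H; by case: #|F| => [|[|]].
Qed.

Lemma qe_prim (F : finFieldType) (z : F) : odd #|F| -> (#|F|.-1).-primitive_root z ->
  qe z = -1 /\ (-1 : F) != 1.
Proof.
move=> Ho Hz.
have Hn := n_eq Ho; have Hm := m_gt0 Ho.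
have H1 : qe z != 1.
  rewrite /qe -(prim_order_dvd Hz).
  rewrite {1}Hn -muln2; apply/negP => /dvdn_leq; lia.
have H2 : qe z ^+ 2 = 1.
  by rewrite /qe -exprM muln2 -Hn prim_expr_order.
move/eqP: H2; rewrite sqrf_eq1 (negbTE H1) /= => /eqP H3.
by split => //; rewrite -H3.
Qed.

Lemma qe_mul (F : finFieldType) (x y : F) : qe (x * y) = qe x * qe y.
Proof. by rewrite /qe exprMn. Qed.

Lemma qe_pm (F : finFieldType) (x : F) : odd #|F| -> x != 0 -> (qe x = 1) \/ (qe x = -1).
Proof.
move=> Ho nz.
have : qe x ^+ 2 == 1 by rewrite /qe -exprM muln2 -(n_eq Ho) unit_pow.
by rewrite sqrf_eq1 => /orP[/eqP|/eqP]; [left|right].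
Qed.

Lemma qe_sq (F : finFieldType) (x : F) : odd #|F| -> x != 0 -> qe x = 1 -> exists y, y ^+ 2 = x.
Proof.
move=> Ho nz Hx.
have [z Hz] := prim_ex F.
have [i Hi] := prim_rootP Hz (unit_pow nz).
have Hn := n_eq Ho; have Hm := m_gt0 Ho.
move: Hx; rewrite Hi /qe -exprM => /eqP.
rewrite -(prim_order_dvd Hz) {1}Hn -muln2 mulnC dvdn_pmul2r // => H2.
exists (z ^+ (i./2)); rewrite -exprM.
have := odd_double_half i; rewrite (dvdn2 i) in H2.
by move: H2 => /negbTE -> /=; rewrite add0n -muln2 => ->.
Qed.

Definition chi (F : finFieldType) (x : F) : int :=
  if x == 0 then 0 else if qe x == 1 then 1 else -1.

Lemma neg1_ne1 (F : finFieldType) : odd #|F| -> (-1 : F) != 1.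
Proof. by move=> Ho; have [z Hz] := prim_ex F; case: (qe_prim Ho Hz). Qed.

Lemma chi_mul (F : finFieldType) (x y : F) : odd #|F| -> chi (x * y) = chi x * chi y.
Proof.
move=> Ho; rewrite /chi.
have Hn := neg1_ne1 Ho.
have [->|nx] := eqVneq x 0; first by rewrite mul0r eqxx mul0r.
have [->|ny] := eqVneq y 0; first by rewrite mulr0 eqxx mulr0.
rewrite mulf_eq0 (negbTE nx) (negbTE ny) /= qe_mul.
case: (qe_pm Ho nx) => ->; case: (qe_pm Ho ny) => ->; rewrite ?mulr1 ?mulN1r ?opprK ?eqxx //.
all: by rewrite ?mul1r ?mulr1 (negbTE Hn) ?mulrNN ?mulr1.
Qed.

Lemma chi_sum (F : finFieldType) : odd #|F| -> \sum_(x : F) chi x = 0.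
Proof.
move=> Ho; have [z Hz] := prim_ex F.
have [Hz1 Hn] := qe_prim Ho Hz.
have nz : z != 0.
  by apply/eqP => z0; move: Hz1; rewrite z0 /qe expr0n (negbTE (lt0n_neq0 (m_gt0 Ho))) => /eqP; rewrite eq_sym oppr_eq0 oner_eq0.
have chiz : chi z = -1 by rewrite /chi (negbTE nz) Hz1 (negbTE Hn).
have := reindex_inj (mulfI nz) (P := xpredT) (F := @chi F) (op := +%R) (x := 0).
move=> H.
have H2 : \sum_(x : F) chi x = - \sum_(x : F) chi x.
  rewrite {1}H -mulN1r mulr_sumr; apply: eq_bigr => i _.
  by rewrite chi_mul // chiz.
lia.
Qed.

Lemma chi0 (F : finFieldType) : chi (0 : F) = 0.
Proof. by rewrite /chi eqxx. Qed.

Lemma chi1 (F : finFieldType) : chi (1 : F) = 1.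
Proof. by rewrite /chi oner_eq0 /qe expr1n eqxx. Qed.

Lemma chi_sqr (F : finFieldType) (x : F) : x != 0 -> chi x * chi x = 1.
Proof. by move=> nx; rewrite /chi (negbTE nx); case: (qe x == 1). Qed.

Lemma chi_corr (F : finFieldType) (c : F) : odd #|F| -> c != 0 ->
  \sum_(x : F) chi x * chi (x + c) = -1.
Proof.
move=> Ho nc.
pose f (x : F) := 1 + c * x^-1.
have injf : injective f by move=> x y /addrI /(mulfI nc) /invr_inj.
have := reindex_inj injf (P := xpredT) (F := @chi F) (op := +%R) (x := 0).
rewrite chi_sum // (bigD1 0) //= /f invr0 mulr0 addr0 chi1 => /esym S0.
rewrite (bigD1 0) //= chi0 mul0r add0r.
have -> : \sum_(i | i != 0) chi i * chi (i + c) = \sum_(i | i != 0) chi (f i).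
  apply: eq_bigr => x nx.
  rewrite -chi_mul //.
  have -> : x * (x + c) = (x * x) * f x by rewrite /f; field.
  by rewrite (chi_mul _ _ Ho) (chi_mul _ _ Ho) chi_sqr // mul1r.
by move/eqP: S0; rewrite addrC addr_eq0 => /eqP.
Qed.

Lemma chi_corr2 (F : finFieldType) (b b' : F) : odd #|F| -> b != b' ->
  \sum_(a : F) chi (a + b) * chi (a + b') = -1.
Proof.
move=> Ho nb.
have injh : injective (fun a : F => a - b) by move=> x y /addIr.
rewrite (reindex_inj injh) /=.
rewrite -(chi_corr Ho (c := b' - b)); last by rewrite subr_eq0 eq_sym.
by apply: eq_bigr => a _; congr (_ * _); congr chi; ring.
Qed.

Lemma chi_sq_le (F : finFieldType) (x : F) : chi x * chi x <= 1.
Proof. by rewrite /chi; case: (x == 0); case: (qe x == 1). Qed.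

Lemma moment (F : finFieldType) (B : {set F}) : odd #|F| ->
  \sum_(a : F) (\sum_(b in B) chi (a + b)) ^+ 2 <= (#|F| * #|B|)%:R.
Proof.
move=> Ho.
have -> : \sum_(a : F) (\sum_(b in B) chi (a + b)) ^+ 2 =
    \sum_(b in B) \sum_(b' in B) \sum_(a : F) chi (a + b) * chi (a + b').
  transitivity (\sum_(a : F) \sum_(b in B) \sum_(b' in B) chi (a + b) * chi (a + b')).
    apply: eq_bigr => a _; rewrite expr2 mulr_suml; apply: eq_bigr => b _.
    by rewrite mulr_sumr.
  rewrite exchange_big /=; apply: eq_bigr => b _.
  by rewrite exchange_big.
have H : forall b, b \in B -> \sum_(b' in B) \sum_(a : F) chi (a + b) * chi (a + b') <= #|F|%:R.
  move=> b bB; rewrite (bigD1 b) //=.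
  have -> : \sum_(b' in B | b' != b) \sum_(a : F) chi (a + b) * chi (a + b') = - (#|[pred b' in B | b' != b]|%:R).
    rewrite -sumr_const -sumrN; apply: eq_bigr => b' /andP[_ nb].
    by rewrite chi_corr2 // eq_sym.
  have : \sum_(a : F) chi (a + b) * chi (a + b) <= \sum_(a : F) 1.
    by apply: ler_sum => a _; apply: chi_sq_le.
  rewrite sumr_const => Hle.
  apply: le_trans (_ : _ <= \sum_(a : F) chi (a + b) * chi (a + b)) _.
    by rewrite lerBlDr lerDl ler0n.
  exact: Hle.
apply: le_trans (ler_sum _ H) _.
by rewrite sumr_const natrM mulr_natr.
Qed.

Lemma pick_a (F : finFieldType) (B : {set F}) (E : nat) : odd #|F| ->
  (#|F| <= E * E)%N -> B != set0 ->
  exists2 a, a \in B & - (E%:R) <= \sum_(b in B) chi (a + b).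
Proof.
move=> Ho HE nB.
case: (boolP [exists a in B, - (E%:R) <= \sum_(b in B) chi (a + b)]).
  by move=> /exists_inP[a aB Ha]; exists a.
rewrite negb_exists_in => /forall_inP Hall.
have Hlo : forall a, a \in B -> (#|F|%:R + 1) <= (\sum_(b in B) chi (a + b)) ^+ 2.
  move=> a aB; have := Hall a aB; rewrite -ltNge expr2.
  set S := \sum_(b in B) chi (a + b) => HS.
  have HE' : (#|F|%:R : int) <= E%:R * E%:R by rewrite -natrM ler_nat.
  nia.
have H1 : \sum_(a in B) (#|F|%:R + 1) <= \sum_(a in B) (\sum_(b in B) chi (a + b)) ^+ 2 :> int.
  exact: ler_sum.
have H2 : \sum_(a in B) (\sum_(b in B) chi (a + b)) ^+ 2 <= \sum_(a : F) (\sum_(b in B) chi (a + b)) ^+ 2.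
  rewrite [X in _ <= X](bigID (fun a => a \in B)) /= lerDl.
  by apply: sumr_ge0 => a _; apply: sqr_ge0.
have H3 := moment B Ho.
rewrite sumr_const in H1.
have Hc : (0 < #|B|)%N by rewrite card_gt0.
move: (le_trans H1 (le_trans H2 H3)).
rewrite -mulr_natr natrM !natz => H4.
exfalso; lia.
Qed.

Lemma sum_ind (T : finType) (A : {set T}) (P : pred T) :
  \sum_(b in A) ((P b)%:R : int) = (#|[set b in A | P b]|)%:R.
Proof.
rewrite (bigID P) /= [X in _ + X]big1 ?addr0; last by move=> i /andP[_ /negbTE ->].
rewrite (eq_bigr (fun _ => 1)); last by move=> i /andP[_ ->].
rewrite sumr_const; congr (_ %:R); apply: eq_card => x; by rewrite inE.
Qed.

Lemma sum_ind1 (T : finType) (A : {set T}) (c : T) :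
  \sum_(b in A) ((b == c)%:R : int) <= 1.
Proof.
rewrite sum_ind lern1; apply: (@leq_trans #|[set c]|); last by rewrite cards1.
by apply: subset_leq_card; apply/subsetP => x; rewrite !inE => /andP[_ ->].
Qed.

Lemma step (F : finFieldType) (B : {set F}) (E : nat) : odd #|F| ->
  (#|F| <= E * E)%N -> B != set0 ->
  exists a, a \in B /\ exists B' : {set F},
    [/\ B' \subset B, (forall b, b \in B' -> (b != a) && (chi (a + b) == 1)) &
        (#|B| <= 2 * #|B'| + E + 3)%N].
Proof.
move=> Ho HE nB.
have [a aB Ha] := pick_a Ho HE nB.
exists a; split => //.
pose B' := [set b in B | (b != a) && (chi (a + b) == 1)].
have sB : B' \subset B by apply/subsetP => x; rewrite inE => /andP[].
exists B'; split => //.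
  by move=> b; rewrite inE => /andP[].
have Hpt : forall b, b \in B -> chi (a + b) <=
    2 * ((b \in B')%:R) - 1 + ((a + b == 0)%:R) + 2 * ((b == a)%:R).
  move=> b bB; rewrite inE bB /=.
  have [->|nba] := eqVneq b a.
    rewrite /= /chi; case: (a + a == 0); case: (qe (a + a) == 1) => //.
  rewrite /chi; case: (a + b == 0) => /=; last by case: (qe (a + b) == 1).
  by [].
have := @ler_sum _ _ (index_enum F) (fun b => b \in B) _ _ Hpt.
rewrite !big_split /= -!mulr_sumr sumr_const.
have -> : \sum_(i in B) ((i \in B')%:R : int) = #|B'|%:R.
  rewrite sum_ind; congr (_ %:R); apply: eq_card => x; rewrite !inE.
  by case: (x \in B).
have H1 := sum_ind1 B a.
have H2 : \sum_(i in B) ((a + i == 0)%:R : int) <= 1.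
  apply: le_trans (sum_ind1 B (- a)); apply: ler_sum => i _.
  by rewrite addrC addr_eq0.
move: Ha H1 H2; set S := \sum_(b in B) _.
rewrite ?mulNrn !natz => Ha H1 H2 H3.
suff : (#|B|%:R <= (2 * #|B'| + E + 3)%N%:R :> int) by rewrite ler_nat.
rewrite !natrD ?natrM; move: H1 H2 H3 Ha; rewrite !natz; lra.
Qed.

Lemma adj_ok (F : finFieldType) (x y : F) : odd #|F| -> chi (x + y) == 1 ->
  x + y != 0 /\ exists b, b ^+ 2 = x + y.
Proof.
move=> Ho; rewrite /chi; case: (eqVneq (x + y) 0) => [//|nz] /=.
case: (boolP (qe (x + y) == 1)) => [/eqP Hq _|//].
by split => //; apply: qe_sq.
Qed.

Lemma inj5 (F : finFieldType) (f : 'I_5 -> F) :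
  (forall i j : 'I_5, (i < j)%N -> f j != f i) -> injective f.
Proof.
move=> H i j Eij; case: (ltngtP i j) => [lt|gt|eq].
- by have := H _ _ lt; rewrite Eij eqxx.
- by have := H _ _ gt; rewrite Eij eqxx.
- exact: val_inj.
Qed.

Lemma main5 (F : finFieldType) : odd #|F| -> (487 < #|F|)%N ->
  exists a : 'I_5 -> F,
    injective a /\ (forall i, a i != 0) /\
    (forall i j : 'I_5, (i < j)%N -> a i + a j != 0 /\ exists b : F, b ^+ 2 = a i + a j).
Proof.
move=> Ho Hq.
pose E := (#|F| %/ 20)%N.
have HE : (#|F| <= E * E)%N.
  have := divn_eq #|F| 20; have := ltn_pmod #|F| (isT : (0 < 20)%N).
  rewrite -/E; nia.
pose B0 : {set F} := [set~ 0].
have cB0 : #|B0| = #|F|.-1 by rewrite cardsC1.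
have n0 : B0 != set0 by rewrite -card_gt0 cB0; lia.
have [a1 [a1B [B1 [s1 h1 c1]]]] := step Ho HE n0.
have n1 : B1 != set0 by rewrite -card_gt0; lia.
have [a2 [a2B [B2 [s2 h2 c2]]]] := step Ho HE n1.
have n2 : B2 != set0 by rewrite -card_gt0; lia.
have [a3 [a3B [B3 [s3 h3 c3]]]] := step Ho HE n2.
have n3 : B3 != set0 by rewrite -card_gt0; lia.
have [a4 [a4B [B4 [s4 h4 c4]]]] := step Ho HE n3.
have n4 : B4 != set0 by rewrite -card_gt0; lia.
have [a5 [a5B _]] := step Ho HE n4.
pose a (i : 'I_5) := nth 0 [:: a1; a2; a3; a4; a5] i.
have adj : forall i j : 'I_5, (i < j)%N -> (a j != a i) && (chi (a i + a j) == 1).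
  have S1 := subsetP s1; have S2 := subsetP s2; have S3 := subsetP s3; have S4 := subsetP s4.
  move=> [[|[|[|[|[|i]]]]] Hi] [[|[|[|[|[|j]]]]] Hj] //= _; rewrite /a /=.
  - exact: h1.
  - exact/h1/S2.
  - exact/h1/S2/S3.
  - exact/h1/S2/S3/S4.
  - exact: h2.
  - exact/h2/S3.
  - exact/h2/S3/S4.
  - exact: h3.
  - exact/h3/S4.
  - exact: h4.
exists a; split; last split.
- by apply: inj5 => i j /adj /andP[].
- have S0 := subsetP s1; have S1 := subsetP s2; have S2 := subsetP s3; have S3 := subsetP s4.
  have inB0 : forall x, x \in B0 -> x != 0 by move=> x; rewrite !inE.
  move=> [[|[|[|[|[|i]]]]] Hi] //; rewrite /a /=; apply: inB0.
  + exact: a1B.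
  + exact/S0.
  + exact/S0/S1.
  + exact/S0/S1/S2.
  + exact/S0/S1/S2/S3.
- by move=> i j /adj /andP[_ /(adj_ok Ho)].
Qed.

Theorem lemma4p4 (F : finFieldType) (p k : nat) :
  prime p -> odd p -> #|F| = (p ^ k)%N -> (487 < p ^ k)%N ->
  exists a : 'I_5 -> F,
    injective a /\ (forall i, a i != 0) /\
    (forall i j : 'I_5, (i < j)%N -> a i + a j != 0 /\ exists b : F, b ^+ 2 = a i + a j).
Proof.
move=> _ Hodd Hc Hq; apply: main5.
- by rewrite Hc oddX Hodd orbT.
- by rewrite Hc.
Qed.
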